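(* Let $\phi\neq\psi$ be two seeds. Then $perms(\phi)\cap perms(\psi)\neq\emptyset$ if and only if either $mis(\phi)=mis(\psi)\oplus 1$ or $mis(\psi)=mis(\phi)\oplus 1$, and moreover the sequence obtained from $\phi$ by deleting the entry $mis(\psi)$ coincides with the sequence obtained from $\psi$ by deleting the entry $mis(\phi)$.
   Context: Fix an integer $n\ge 5$. An $n$-permutation is a sequence $(a_1,\dots,a_n)$ of the distinct elements of $\{1,\dots,n\}$. On $\{1,\dots,n-1\}$ let $a\oplus 1=a+1$ for $a<n-1$ and $(n-1)\oplus 1=1$. A seed is an $(n-1)$-tuple $\psi=(a_1,\dots,a_{n-1})$ of distinct elements of $\{1,\dots,n\}$ with $a_1=n$ and $a_2\oplus1\notin\{a_1,\dots,a_{n-1}\}$; its missing element is $mis(\psi)=a_2\oplus 1$. The package $perms(\psi)$ is the set of all $n$-permutations obtained from $\psi$ by inserting $mis(\psi)$ at any position and then applying any cyclic rotation. *)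

(* Defs.v *)
From mathcomp Require Import all_boot.
Set Implicit Arguments. Unset Strict Implicit. Unset Printing Implicit Defensive.

(* a (+) 1 on {1,...,n-1}: a+1 if a < n-1, and (n-1)(+)1 = 1. *)
Definition oplus1 (n a : nat) : nat := if a < n.-1 then a.+1 else 1.

(* A seed: (n-1)-tuple (a_1,...,a_{n-1}) of distinct elements of {1..n},
   with a_1 = n and a_2 (+) 1 not among the a_i.  Indices are 0-based. *)
Definition is_seed (n : nat) (s : seq nat) : bool :=
  [&& size s == n.-1, uniq s, all (fun a => (1 <= a <= n)) s,
      nth 0 s 0 == n & oplus1 n (nth 0 s 1) \notin s].

Definition mis (n : nat) (s : seq nat) : nat := oplus1 n (nth 0 s 1).

Definition insert_at (i : nat) (x : nat) (s : seq nat) : seq nat :=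
  take i s ++ x :: drop i s.

Definition in_perms (n : nat) (s p : seq nat) : Prop :=
  exists i k, i <= size s /\ k < n /\ p = rot k (insert_at i (mis n s) s).

(* Main.v *)
Require Import Defs.
From mathcomp Require Import all_boot.
From mathcomp Require Import zify.

Lemma rem_cat (x : nat) s1 s2 :
  rem x (s1 ++ s2) = if x \in s1 then rem x s1 ++ s2 else s1 ++ rem x s2.
Proof.
elim: s1 => [|a s1 IH] //=; rewrite in_cons; case: eqP => [->|ne].
  by rewrite eqxx.
rewrite IH; case: (x \in s1) => //=; case: eqP => // e; by case: ne.
Qed.

Lemma rem_swap (x : nat) t d : uniq (t ++ d) ->
  exists k', rem x (d ++ t) = rot k' (rem x (t ++ d)).
Proof.
rewrite cat_uniq => /and3P[_ dj _].
rewrite !rem_cat.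
case hx: (x \in d).
- have hx' : (x \in t) = false.
    by apply/negbTE; move/hasPn: dj => /(_ x hx).
  by exists (size t); rewrite hx' rot_size_cat.
- exists (size (rem x t)).
  rewrite [rem x d]rem_id ?hx //.
  have -> : (if x \in t then rem x t ++ d else t ++ d) = rem x t ++ d.
    by case: ifP => // h; rewrite [rem x t]rem_id // h.
  by rewrite rot_size_cat.
Qed.

Lemma rem_rot (x : nat) k s : uniq s -> exists k', rem x (rot k s) = rot k' (rem x s).
Proof.
move=> us; rewrite /rot; have := rem_swap x (take k s) (drop k s).
by rewrite cat_take_drop; apply.
Qed.

Lemma rot_head (q : seq nat) a b : uniq q -> 0 < size q ->
  nth 0 (rot a q) 0 = nth 0 (rot b q) 0 -> rot a q = rot b q.
Proof.
move=> uq sq.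
have red : forall c, exists2 c', c' < size q & rot c q = rot c' q.
  move=> c; case: (ltnP c (size q)) => h; first by exists c.
  by exists 0 => //; rewrite rot_oversize // rot0.
case: (red a) => a' ha ->; case: (red b) => b' hb ->.
have nr : forall c, c < size q -> nth 0 (rot c q) 0 = nth 0 q c.
  move=> c hc; rewrite /rot nth_cat size_drop subn_gt0 hc nth_drop addn0 //.
rewrite !nr // => /eqP; rewrite nth_uniq // => /eqP -> //.
Qed.

Lemma rot_head' (q : seq nat) a b : uniq q ->
  nth 0 (rot a q) 0 = nth 0 (rot b q) 0 -> rot a q = rot b q.
Proof.
move=> uq; case: (posnP (size q)) => h; last exact: rot_head.
by move/size0nil: h => ->.
Qed.

Lemma insert_uniq (x : nat) i s : x \notin s -> uniq s -> uniq (insert_at i x s).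
Proof.
move=> xs us; rewrite /insert_at.
have pe : perm_eq (take i s ++ [:: x] ++ drop i s) ([:: x] ++ take i s ++ drop i s)
  by rewrite perm_catCA.
by rewrite (perm_uniq pe) /= cat_take_drop xs us.
Qed.

Lemma rem_insert (x : nat) i s : x \notin s -> rem x (insert_at i x s) = s.
Proof.
move=> xs; rewrite /insert_at rem_cat.
have -> : (x \in take i s) = false.
  by apply/negbTE; apply: contra xs; apply: mem_take.
by rewrite /= eqxx cat_take_drop.
Qed.

Lemma insert_rem (x : nat) p : x \in p ->
  index x p <= size (rem x p) /\ p = insert_at (index x p) x (rem x p).
Proof.
elim: p => [|a p IH] //=; rewrite in_cons; case: (eqVneq x a) => [<-|ne] /=.
  by move=> _; split => //; rewrite /insert_at /= take0 drop0.
move=> xp; case: (IH xp) => h1 h2; split => //.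
by rewrite /insert_at /= {1}h2.
Qed.

Lemma rem_comm (x y : nat) s : uniq s -> rem x (rem y s) = rem y (rem x s).
Proof.
move=> us; rewrite (rem_filter x (rem_uniq y us)) (rem_filter y us).
rewrite (rem_filter y (rem_uniq x us)) (rem_filter x us) -!filter_predI.
by apply: eq_filter => z /=; rewrite andbC.
Qed.

Lemma seq2 (s : seq nat) : 1 < size s -> s = nth 0 s 0 :: nth 0 s 1 :: drop 2 s.
Proof. by case: s => [|a [|b u]] //= _; rewrite drop0. Qed.

Lemma seq1 (s : seq nat) : 0 < size s -> s = nth 0 s 0 :: drop 1 s.
Proof. by case: s => [|a u] //= _; rewrite drop0. Qed.

Lemma ins1 (m : nat) s : 0 < size s -> insert_at 1 m s = nth 0 s 0 :: m :: drop 1 s.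
Proof. by case: s => [|a u] //= _; rewrite /insert_at /= take0 drop0. Qed.

Lemma head_rem (x : nat) s : nth 0 s 0 != x -> 0 < size s -> nth 0 (rem x s) 0 = nth 0 s 0.
Proof. case: s => [|a t] //= h _; by rewrite (negbTE h). Qed.

Lemma nth1_rem (x : nat) s : 1 < size s -> nth 0 s 0 != x -> nth 0 s 1 != x ->
  nth 0 (rem x s) 1 = nth 0 s 1.
Proof. case: s => [|a [|b u]] //= _ h1 h2; by rewrite (negbTE h1) /= (negbTE h2). Qed.

Lemma oplus1_range n a : 2 <= n -> 1 <= oplus1 n a <= n.-1.
Proof. rewrite /oplus1; case: ifP => h; lia. Qed.

Lemma oplus1_inj n a b : 1 <= a <= n.-1 -> 1 <= b <= n.-1 -> oplus1 n a = oplus1 n b -> a = b.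
Proof. rewrite /oplus1; case: ifP => h1; case: ifP => h2; lia. Qed.

Lemma oplus1_neq n a : 3 <= n -> 1 <= a <= n.-1 -> oplus1 n a != a.
Proof. rewrite /oplus1; case: ifP => h1; lia. Qed.

Lemma perms_rem n s p : is_seed n s -> in_perms n s p ->
  uniq p /\ exists a, s = rem (mis n s) (rot a p).
Proof.
case/and5P=> _ us _ _ nm [i [k [hi [hk ->]]]].
split; first by rewrite rot_uniq; apply: insert_uniq.
exists (size (insert_at i (mis n s) s) - k).
by rewrite -(size_rot k) -/(rotr k _) rotK rem_insert.
Qed.

Lemma seed_mis_range n s : 2 <= n -> 1 <= mis n s <= n.-1.
Proof. move=> h; exact: oplus1_range. Qed.

Lemma seed_nth1 n s : 5 <= n -> is_seed n s -> 1 <= nth 0 s 1 <= n.-1.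
Proof.
move=> h5 /and5P[/eqP sz us al /eqP h0 _].
have m1 : nth 0 s 1 \in s by apply: mem_nth; rewrite sz; lia.
move/allP: al => /(_ _ m1) /andP[a1 a2].
have : nth 0 s 1 != nth 0 s 0 by rewrite nth_uniq // sz; lia.
rewrite h0 => /eqP; lia.
Qed.

Lemma back n phi psi : 5 <= n -> is_seed n phi -> is_seed n psi ->
  mis n psi = oplus1 n (mis n phi) -> rem (mis n psi) phi = rem (mis n phi) psi ->
  exists p, in_perms n phi p /\ in_perms n psi p.
Proof.
move=> h5 sphi spsi hm hr.
have r1 := seed_nth1 _ _ h5 spsi.
have r2 := seed_mis_range _ phi (ltnW (ltnW (ltnW h5))).
have e1 : nth 0 psi 1 = mis n phi by apply: (oplus1_inj _ _ _ r1 r2); rewrite -hm.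
move: (sphi) (spsi) => /and5P[/eqP sz1 u1 al1 /eqP h01 nm1] /and5P[/eqP sz2 u2 al2 /eqP h02 nm2].
have dpsi : psi = nth 0 psi 0 :: nth 0 psi 1 :: drop 2 psi by apply: seq2; rewrite sz2; lia.
have hneq : mis n psi != mis n phi by rewrite hm; apply: oplus1_neq => //; lia.
have hn1 : mis n psi != n by have := seed_mis_range _ psi (ltnW (ltnW (ltnW h5))); lia.
have hn2 : mis n phi != n by lia.
set mp := mis n phi in r2 e1 hneq hn1 hn2 hm hr *.
set mq := mis n psi in hneq hn1 hm hr *.
set t := drop 1 phi.
have ephi : phi = n :: t.
  by rewrite /t -h01; apply: seq1; rewrite sz1; lia.
set C := insert_at 1 (mp) phi.
have eC : C = n :: mp :: t by rewrite /C ins1 ?h01 // sz1; lia.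
exists C; split.
  exists 1, 0; split; first by rewrite sz1; lia.
  by split; [lia | rewrite rot0].
have hmC : mq \in C.
  rewrite eC !in_cons (negbTE hn1) (negbTE hneq) /=.
  apply/negPn/negP => nt.
  have : mq \notin phi by rewrite ephi in_cons (negbTE hn1).
  move/rem_id => e.
  have : size (rem (mp) psi) = n.-2.
    rewrite size_rem ?sz2 //; rewrite -e1; apply: mem_nth; rewrite sz2; lia.
  rewrite -hr e sz1; lia.
have hrC : rem (mq) C = psi.
  rewrite eC /= eq_sym (negbTE hn1) eq_sym (negbTE hneq).
  rewrite dpsi h02 e1; congr (_ :: _ :: _).
  move: hr; rewrite {1}ephi dpsi h02 e1 /=.
  rewrite (eq_sym n mq) (negbTE hn1) (eq_sym n mp) (negbTE hn2) eqxx drop0; by case.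
case: (insert_rem _ _ hmC) => hi hC.
exists (index (mq) C), 0; split; first by rewrite -hrC.
by split; [lia | rewrite rot0 {1}hC hrC].
Qed.

Theorem mainTheorem2 (n : nat) (phi psi : seq nat) :
  5 <= n -> is_seed n phi -> is_seed n psi -> phi <> psi ->
  ((exists p : seq nat, in_perms n phi p /\ in_perms n psi p) <->
   ((mis n phi = oplus1 n (mis n psi) \/ mis n psi = oplus1 n (mis n phi)) /\
    rem (mis n psi) phi = rem (mis n phi) psi)).
Proof.
move=> h5 sphi spsi neq; split; last first.
  case=> [[e|e] hr].
    case: (back _ _ _ h5 spsi sphi e (esym hr)) => p [h1 h2]; by exists p.
  exact: back _ _ _ h5 sphi spsi e hr.
case=> p [hp1 hp2].
case: (perms_rem _ _ _ sphi hp1) => up [a ea]; case: (perms_rem _ _ _ spsi hp2) => _ [b eb].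
have rq := seed_mis_range n psi (ltnW (ltnW (ltnW h5))).
have rp := seed_mis_range n phi (ltnW (ltnW (ltnW h5))).
move: (sphi) (spsi) => /and5P[/eqP sz1 u1 al1 /eqP h01 nm1] /and5P[/eqP sz2 u2 al2 /eqP h02 nm2].
have mdef : forall s, mis n s = oplus1 n (nth 0 s 1) by [].
set mp := mis n phi in ea rp *.
set mq := mis n psi in eb rq *.
have hn1 : mq != n by lia.
have hn2 : mp != n by lia.
case: (rem_rot mp a p up) => a' ea'; rewrite ea' in ea.
case: (rem_rot mq b p up) => b' eb'; rewrite eb' in eb.
have hne : mp != mq.
  apply/eqP => e; apply: neq; rewrite ea eb -e; apply: rot_head' (rem_uniq _ up) _.
  by rewrite -e in eb; rewrite -ea -eb h01 h02.
have hr : rem mq phi = rem mp psi.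
  have [c ec] := rem_rot mq a' _ (rem_uniq mp up).
  have [d ed] := rem_rot mp b' _ (rem_uniq mq up).
  have e1 : rem mq phi = rot c (rem mq (rem mp p)) by rewrite ea.
  have e2 : rem mp psi = rot d (rem mq (rem mp p)) by rewrite eb ed rem_comm.
  rewrite e1 e2; apply: rot_head'; first by do 2 apply: rem_uniq.
  rewrite -e1 -e2 !head_rem ?h01 ?h02 ?sz1 ?sz2 //; lia.
split => //.
case: (eqVneq (nth 0 phi 1) mq) => e2.
  by left; rewrite /mp mdef e2.
case: (eqVneq (nth 0 psi 1) mp) => e3.
  by right; rewrite /mq mdef e3.
have := congr1 (fun s => nth 0 s 1) hr => /=.
rewrite !nth1_rem ?h01 ?h02 ?sz1 ?sz2 //; try lia.
move=> e4; move: hne; rewrite /mp /mq !mdef e4 eqxx //.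
Qed.
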